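(* Let $G$ be a finite simple graph. Suppose there exists an injective coloring $f$ of $S_G^2$ using exactly $\chi_i(S_G^2)$ colors such that all extreme vertices of $S_G^2$ receive the same color, and for each extreme vertex $(u,u)$, $u\in V(G)$, the color $f(u,u)$ is not assigned to any neighbor of $(u,u)$ in $S_G^2$. Then $\chi_i(S_G^n)=\chi_i(S_G^2)$ for all $n\ge 2$.
   Context: For a graph $H$, an injective $k$-coloring is a map $f:V(H)\to\{1,\dots,k\}$ such that any two distinct vertices $u,w$ with $f(u)=f(w)$ have no common neighbor; $\chi_i(H)$ is the least such $k$. For a graph $G$ and positive integer $n$, the generalized Sierpiński graph $S_G^n$ has vertex set $V(G)^n$, and $(u_1,\dots,u_n)$, $(v_1,\dots,v_n)$ are adjacent if and only if there is $d\in\{1,\dots,n\}$ with $u_i=v_i$ for $i<d$, $u_dv_d\in E(G)$, and $u_i=v_d$, $v_i=u_d$ for all $i>d$. The extreme vertices of $S_G^n$ are the vertices $(u,u,\dots,u)$ with $u\in V(G)$. *)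

(* Defs.v *)
From mathcomp Require Import all_boot.
Set Implicit Arguments. Unset Strict Implicit. Unset Printing Implicit Defensive.

Definition simple_graph (T : finType) (e : rel T) : Prop :=
  symmetric e /\ irreflexive e.

(* Generalized Sierpinski graph S_G^n on V(G)^n (n-tuples), adjacency as in the paper
   (indices 0-based). *)
Definition sierp_adj (T : finType) (e : rel T) (n : nat) : rel (n.-tuple T) :=
  fun u v =>
    [exists d : 'I_n,
      e (tnth u d) (tnth v d) &&
      [forall i : 'I_n,
        ((i < d)%N ==> (tnth u i == tnth v i)) &&
        ((d < i)%N ==> (tnth u i == tnth v d) && (tnth v i == tnth u d))]].

Definition extreme (T : finType) (n : nat) (u : T) : n.-tuple T := nseq_tuple n u.
Arguments extreme {T} n u.

Definition inj_coloring (V : finType) (h : rel V) (C : Type) (f : V -> C) : Prop :=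
  forall u w x : V, u != w -> f u = f w -> ~ (h u x && h w x).

Definition inj_colorableb (V : finType) (h : rel V) (k : nat) : bool :=
  [exists f : {ffun V -> 'I_k},
    [forall u, forall w, forall x,
      ((u != w) && (f u == f w)) ==> ~~ (h u x && h w x)]].

Lemma inj_colorableb_exists (V : finType) (h : rel V) :
  exists k, inj_colorableb h k.
Proof.
exists #|V|; apply/existsP; exists [ffun x => enum_rank x].
apply/forallP => u; apply/forallP => w; apply/forallP => x.
apply/implyP => /andP [Huw]; rewrite !ffunE => /eqP /enum_rank_inj Heq.
by rewrite Heq eqxx in Huw.
Qed.

Definition inj_chrom (V : finType) (h : rel V) : nat :=
  ex_minn (inj_colorableb_exists h).
Arguments sierp_adj {T} e n _ _.

(* Main.v *)
Require Import Defs.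
From mathcomp Require Import all_boot zify.
Set Implicit Arguments. Unset Strict Implicit. Unset Printing Implicit Defensive.

Lemma sierp_adjP (T : finType) (e : rel T) n (u v : n.-tuple T) :
  reflect (exists d : 'I_n, [/\ e (tnth u d) (tnth v d),
     (forall i : 'I_n, (i < d)%N -> tnth u i = tnth v i) &
     (forall i : 'I_n, (d < i)%N -> tnth u i = tnth v d /\ tnth v i = tnth u d)])
   (sierp_adj e n u v).
Proof.
apply: (iffP existsP) => [[d /andP[Hd /forallP H]]|[d [Hd H1 H2]]]; exists d.
  split=> // i Hi; have /andP[/implyP A /implyP B] := H i.
    by apply/eqP/A.
  by have /andP[/eqP ? /eqP ?] := B Hi.
rewrite Hd /=; apply/forallP => i; apply/andP; split; apply/implyP => Hi.
  by rewrite H1.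
by have [-> ->] := H2 _ Hi; rewrite !eqxx.
Qed.

Lemma sierp_adj_sym (T : finType) (e : rel T) n (u v : n.-tuple T) :
  symmetric e -> sierp_adj e n u v -> sierp_adj e n v u.
Proof.
move=> Hs /sierp_adjP [d [Hd H1 H2]]; apply/sierp_adjP; exists d; split.
- by rewrite Hs.
- by move=> i Hi; rewrite H1.
- by move=> i Hi; have [-> ->] := H2 _ Hi.
Qed.

Lemma inj_chrom_le_k (V : finType) (h : rel V) k :
  inj_colorableb h k -> (inj_chrom h <= k)%N.
Proof. by rewrite /inj_chrom; case: ex_minnP => k0 _ Hm /Hm. Qed.

Lemma inj_chrom_col (V : finType) (h : rel V) : inj_colorableb h (inj_chrom h).
Proof. by rewrite /inj_chrom; case: ex_minnP. Qed.

Lemma colorable_of (V : finType) (h : rel V) k (f : V -> 'I_k) :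
  inj_coloring h f -> inj_colorableb h k.
Proof.
move=> Hf; apply/existsP; exists [ffun x => f x].
apply/forallP => u; apply/forallP => w; apply/forallP => x.
apply/implyP => /andP [Huw]; rewrite !ffunE => /eqP Hc.
by apply/negP; apply: Hf Hc.
Qed.

Definition i1 m : 'I_m.+2 := Ordinal (leqnSn m.+1).
Definition Lt (T : finType) m (y : (m.+2).-tuple T) : 2.-tuple T :=
  [tuple tnth y (i1 m); tnth y ord_max].
Definition Et (T : finType) m (z : T) (p : 2.-tuple T) : (m.+2).-tuple T :=
  [tuple if (i < m)%N then z else if i == m :> nat then tnth p ord0 else tnth p ord_max
    | i < m.+2].

Lemma tnth_L0 (T : finType) m (y : (m.+2).-tuple T) (i : 'I_2) :
  i = 0 :> nat -> tnth (Lt y) i = tnth y (i1 m).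
Proof. by case: i => [[|[|]] ?]. Qed.
Lemma tnth_L1 (T : finType) m (y : (m.+2).-tuple T) (i : 'I_2) :
  i = 1 :> nat -> tnth (Lt y) i = tnth y ord_max.
Proof. by case: i => [[|[|]] ?]. Qed.

Lemma tnth_E (T : finType) m (z : T) p (i : 'I_m.+2) :
  tnth (Et m z p) i = if (i < m)%N then z else if i == m :> nat then tnth p ord0 else tnth p ord_max.
Proof. by rewrite tnth_mktuple. Qed.

Lemma ord2 (i : 'I_2) : i = ord0 \/ i = ord_max.
Proof. by case: i => [[|[|]] Hi]; [left|right|]; rewrite //; apply: val_inj. Qed.

Lemma E_inj (T : finType) m (z : T) : injective (Et m z).
Proof.
move=> p q H.
have A := congr1 (fun t => tnth t (i1 m)) H.
have B := congr1 (fun t => tnth t ord_max) H.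
rewrite /= !tnth_E /= ltnn eqxx in A.
rewrite /= !tnth_E /= ltnNge leqnSn /= in B.
have C : (m.+1 == m) = false by lia.
rewrite C in B.
by apply: eq_from_tnth => i; case: (ord2 i) => ->.
Qed.

Lemma E_adj (T : finType) (e : rel T) m (z : T) p q :
  sierp_adj e 2 p q -> sierp_adj e m.+2 (Et m z p) (Et m z q).
Proof.
move=> /sierp_adjP [d [Hd H1 H2]]; apply/sierp_adjP.
case: (ord2 d) => Ed; subst d.
- exists (i1 m); rewrite !tnth_E /= ltnn eqxx; split => // i Hi.
    by rewrite !tnth_E /= Hi.
  have -> : i = ord_max by apply: val_inj => /=; move: (ltn_ord i) Hi => /=; lia.
  rewrite !tnth_E /= ltnNge leqnSn /=.
  have C : (m.+1 == m) = false by lia.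
  rewrite C; exact: (H2 ord_max).
- exists ord_max; rewrite !tnth_E /= ltnNge leqnSn /=.
  have C : (m.+1 == m) = false by lia.
  rewrite C; split => // i Hi; last by move: (ltn_ord i) Hi => /=; lia.
  rewrite !tnth_E; case: ifP => // Hlt; case: ifP => Him.
    by apply: (H1 ord0).
  by move: Hi Him Hlt => /=; lia.
Qed.

Lemma lower (T : finType) (e : rel T) m :
  (inj_chrom (sierp_adj e 2) <= inj_chrom (sierp_adj e m.+2))%N.
Proof.
apply: inj_chrom_le_k.
have /existsP [g /forallP Hg] := inj_chrom_col (sierp_adj e m.+2).
apply/existsP; exists [ffun p => g (Et m (odflt (tnth p ord0) [pick x : T]) p)].
apply/forallP => u; apply/forallP => w; apply/forallP => x.
rewrite !ffunE; case: pickP => [z _ | H0]; last by have := H0 (tnth u ord0).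
apply/implyP => /andP [Huw Hc]; apply/negP => /andP [A B].
have /forallP Hu := Hg (Et m z u).
have /forallP Hw := Hu (Et m z w).
have /implyP Hx := Hw (Et m z x).
have : (Et m z u != Et m z w) && (g (Et m z u) == g (Et m z w)).
  by rewrite Hc andbT; apply: contra Huw => /eqP /E_inj ->.
by move/Hx; rewrite !E_adj.
Qed.

Lemma adj_high (T : finType) (e : rel T) m (u x : (m.+2).-tuple T) (d : 'I_m.+2) :
  e (tnth u d) (tnth x d) ->
  (forall i : 'I_m.+2, (i < d)%N -> tnth u i = tnth x i) ->
  (forall i : 'I_m.+2, (d < i)%N -> tnth u i = tnth x d /\ tnth x i = tnth u d) ->
  (m <= d)%N ->
  sierp_adj e 2 (Lt u) (Lt x) /\ (forall i : 'I_m.+2, (i < m)%N -> tnth u i = tnth x i).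
Proof.
move=> Hd H1 H2 Hm; split; last first.
  by move=> i Hi; apply: H1; lia.
apply/sierp_adjP.
have [Ed|Ed] : d = i1 m \/ d = ord_max.
  have := ltn_ord d; case: (ltngtP d m) => H.
  - lia.
  - by move=> Hl; right; apply: val_inj => /=; lia.
  - by left; apply: val_inj.
- subst d; exists ord0; rewrite !tnth_L0 //; split => // i Hi.
  have -> : i = ord_max by case: (ord2 i) => // E; subst i.
  rewrite !tnth_L1 //; apply: H2 => /=; lia.
- subst d; exists ord_max; rewrite !tnth_L1 //; split => // i Hi.
    have -> : i = ord0 by case: (ord2 i) => // E; subst i.
    by rewrite !tnth_L0 //; apply: H1 => /=; lia.
  by move: (ltn_ord i) Hi => /=; lia.
Qed.

Lemma adj_low (T : finType) (e : rel T) m (u x : (m.+2).-tuple T) (d : 'I_m.+2) :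
  (forall i : 'I_m.+2, (d < i)%N -> tnth u i = tnth x d /\ tnth x i = tnth u d) ->
  (d < m)%N ->
  Lt u = extreme 2 (tnth x d) /\ Lt x = extreme 2 (tnth u d).
Proof.
move=> H2 Hm.
have [A1 A2] : tnth u (i1 m) = tnth x d /\ tnth x (i1 m) = tnth u d by apply: H2 => /=; lia.
have [B1 B2] : tnth u ord_max = tnth x d /\ tnth x ord_max = tnth u d by apply: H2 => /=; lia.
split; apply: eq_from_tnth => i; rewrite tnth_nseq;
  case: (ord2 i) => ->; [rewrite tnth_L0 | rewrite tnth_L1|rewrite tnth_L0 | rewrite tnth_L1] => //.
Qed.

Lemma upper_col (T : finType) (e : rel T) m k (f : 2.-tuple T -> 'I_k) :
  simple_graph e ->
  inj_coloring (sierp_adj e 2) f ->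
  (forall u v : T, f (extreme 2 u) = f (extreme 2 v)) ->
  (forall (u : T) (w : 2.-tuple T),
          sierp_adj e 2 (extreme 2 u) w -> f w <> f (extreme 2 u)) ->
  inj_coloring (sierp_adj e m.+2) (fun y => f (Lt y)).
Proof.
move=> [Hsym Hirr] Hf Hext Hnb u w x Huw /= Hc
  /andP[/sierp_adjP [d1 [Hd1 H11 H12]] /sierp_adjP [d2 [Hd2 H21 H22]]].
have low_low : forall (u w : (m.+2).-tuple T) (d1 d2 : 'I_m.+2),
   (d1 < d2 < m)%N -> e (tnth w d2) (tnth x d2) ->
   (forall i : 'I_m.+2, (d1 < i)%N -> tnth u i = tnth x d1 /\ tnth x i = tnth u d1) ->
   (forall i : 'I_m.+2, (d2 < i)%N -> tnth w i = tnth x d2 /\ tnth x i = tnth w d2) ->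
   False.
  move=> u' w' d1' d2' /andP [Hlt Hlm] He Ha Hb.
  have [_ E1] := Ha d2' Hlt.
  have [_ E2] : tnth u' ord_max = tnth x d1' /\ tnth x ord_max = tnth u' d1'
    by apply: Ha => /=; lia.
  have [_ E3] : tnth w' ord_max = tnth x d2' /\ tnth x ord_max = tnth w' d2'
    by apply: Hb => /=; lia.
  by move: He; rewrite E1 -E3 E2 Hirr.
have high_low : forall (u w : (m.+2).-tuple T) (d1 d2 : 'I_m.+2),
   f (Lt u) = f (Lt w) ->
   (d1 < m)%N -> (m <= d2)%N -> e (tnth w d2) (tnth x d2) ->
   (forall i : 'I_m.+2, (d1 < i)%N -> tnth u i = tnth x d1 /\ tnth x i = tnth u d1) ->
   (forall i : 'I_m.+2, (i < d2)%N -> tnth w i = tnth x i) ->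
   (forall i : 'I_m.+2, (d2 < i)%N -> tnth w i = tnth x d2 /\ tnth x i = tnth w d2) ->
   False.
  move=> u' w' d1' d2' Hc' L1 L2 He Ha Hb1 Hb2.
  have [A B] := adj_low e Ha L1.
  have [Aw _] := adj_high He Hb1 Hb2 L2.
  have := sierp_adj_sym Hsym Aw; rewrite B => /Hnb; apply.
  by rewrite -Hc' A.
case: (ltnP d1 m) => L1; case: (ltnP d2 m) => L2.
- case: (ltngtP d1 d2) => D.
  + by apply: (low_low u w d1 d2) => //; rewrite D.
  + by apply: (low_low w u d2 d1) => //; rewrite D.
  + have ED : d1 = d2 by apply: val_inj.
    subst d2; move/negP: Huw; apply; apply/eqP; apply: eq_from_tnth => i.
    case: (ltngtP i d1) => Hi.
    * by rewrite H11 // H21.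
    * by rewrite (H12 _ Hi).1 (H22 _ Hi).1.
    * have -> : i = d1 by apply: val_inj.
      have [_ E1] : tnth u ord_max = tnth x d1 /\ tnth x ord_max = tnth u d1
        by apply: H12 => /=; lia.
      have [_ E2] : tnth w ord_max = tnth x d1 /\ tnth x ord_max = tnth w d1
        by apply: H22 => /=; lia.
      by rewrite -E1 E2.
- exact: (high_low u w d1 d2).
- exact: (high_low w u d2 d1).
- have [A1 P1] := adj_high Hd1 H11 H12 L1.
  have [A2 P2] := adj_high Hd2 H21 H22 L2.
  case: (eqVneq (Lt u) (Lt w)) => EL.
    move/negP: Huw; apply; apply/eqP; apply: eq_from_tnth => i.
    case: (ltnP i m) => Hi; first by rewrite P1 // P2.
    have [->|->] : i = i1 m \/ i = ord_max.
      have := ltn_ord i; case: (ltngtP i m) => H.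
      - lia.
      - by move=> Hl; right; apply: val_inj => /=; lia.
      - by left; apply: val_inj.
    + by have := congr1 (fun t => tnth t ord0) EL; rewrite /= !tnth_L0.
    + by have := congr1 (fun t => tnth t ord_max) EL; rewrite /= !tnth_L1.
  by apply: (Hf _ _ (Lt x) EL Hc); rewrite A1 A2.
Qed.

Theorem mainTheorem2 (T : finType) (e : rel T) :
  simple_graph e ->
  (exists f : 2.-tuple T -> 'I_(inj_chrom (sierp_adj e 2)),
      inj_coloring (sierp_adj e 2) f /\
      (forall u v : T, f (extreme 2 u) = f (extreme 2 v)) /\
      (forall (u : T) (w : 2.-tuple T),
          sierp_adj e 2 (extreme 2 u) w -> f w <> f (extreme 2 u))) ->
  forall n : nat, (2 <= n)%N ->
    inj_chrom (sierp_adj e n) = inj_chrom (sierp_adj e 2).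
Proof.
move=> Hg [f [Hf [Hext Hnb]]] [|[|m]] // _.
apply/eqP; rewrite eqn_leq lower andbT.
apply: inj_chrom_le_k; apply: colorable_of.
exact: upper_col Hg Hf Hext Hnb.
Qed.
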